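(* Let $p,n\in\mathbb N$ with $p\ge n\ge 10$, and write $p=k(n-1)+r$ with $k\in\mathbb N$ and $r\in\{0,1,2,n-5,n-4,n-3,n-2\}$. Then $$\mathrm{ex}(p;T_n^3)=\frac{(n-2)p-r(n-1-r)}2.$$
   Context: All graphs are finite simple graphs. For a graph $L$, $\mathrm{ex}(p;L)$ denotes the maximum number of edges in a graph on $p$ vertices that contains no subgraph isomorphic to $L$. For $n\ge 6$, $T_n^3$ is the tree on vertex set $\{v_0,\ldots,v_{n-1}\}$ with edge set $\{v_0v_1,v_0v_2,\ldots,v_0v_{n-4},\ v_1v_{n-3},\ v_1v_{n-2},\ v_1v_{n-1}\}$. $\mathbb N=\{1,2,\ldots\}$. *)

(* Defs.v *)
From mathcomp Require Import all_boot.
Unset Printing Implicit Defensive.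

(* Each (unordered) edge {x,y} corresponds to the pairs (x,y),(y,x). *)
Definition simple_graph (p : nat) (E : {set 'I_p * 'I_p}) : bool :=
  [forall x : 'I_p, (x, x) \notin E] &&
  [forall x : 'I_p, forall y : 'I_p, ((x, y) \in E) ==> ((y, x) \in E)].

Definition nedges (p : nat) (E : {set 'I_p * 'I_p}) : nat :=
  #|[set e in E | (e.1 < e.2)%N]|.

Definition contains_sub (p m : nat) (E : {set 'I_p * 'I_p}) (L : rel 'I_m) : bool :=
  [exists f : {ffun 'I_m -> 'I_p},
     injectiveb f && [forall i, forall j, L i j ==> ((f i, f j) \in E)]].

Definition ex (p m : nat) (L : rel 'I_m) : nat :=
  \max_(E : {set 'I_p * 'I_p} | @simple_graph p E && ~~ @contains_sub p m E L) @nedges p E.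

Definition T3_edge (n a b : nat) : bool :=
  ((a == 0) && (1 <= b <= n - 4)) || ((a == 1) && (n - 3 <= b <= n - 1)).

Definition T3 (n : nat) : rel 'I_n :=
  fun i j => T3_edge n i j || T3_edge n j i.
Arguments ex p {m} L.

(* Main.v *)
Require Import Defs.
From mathcomp Require Import all_boot zify.


Definition nb {V : finType} (adj : rel V) (W : {set V}) (x : V) : {set V} :=
  [set y in W | adj x y].
Definition dg {V : finType} (adj : rel V) (W : {set V}) (x : V) : nat :=
  #|nb adj W x|.

Lemma in_nb {V : finType} (adj : rel V) W x y :
  (y \in nb adj W x) = (y \in W) && adj x y.
Proof. by rewrite inE. Qed.

Lemma nb_sub {V : finType} (adj : rel V) W x : nb adj W x \subset W.
Proof. by apply/subsetP=> y; rewrite in_nb => /andP[]. Qed.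

Lemma nb_mono {V : finType} (adj : rel V) (W1 W2 : {set V}) x :
  W1 \subset W2 -> nb adj W1 x \subset nb adj W2 x.
Proof.
move=> s; apply/subsetP=> y; rewrite !in_nb => /andP[h ->].
by rewrite (subsetP s _ h).
Qed.

Lemma dg_mono {V : finType} (adj : rel V) (W1 W2 : {set V}) x :
  W1 \subset W2 -> dg adj W1 x <= dg adj W2 x.
Proof. by move=> s; apply: subset_leq_card; apply: nb_mono. Qed.

Lemma nb_irr {V : finType} (adj : rel V) (irr : irreflexive adj) W x :
  x \notin nb adj W x.
Proof. by rewrite in_nb irr andbF. Qed.

Lemma card_disjU {V : finType} (A B : {set V}) :
  [disjoint A & B] -> #|A :|: B| = #|A| + #|B|.
Proof. by move=> d; rewrite cardsU (disjoint_setI0 d) cards0 subn0. Qed.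

Definition DS {V : finType} (adj : rel V) (W : {set V}) : nat :=
  \sum_(x in W) dg adj W x.

Lemma card_sum {V : finType} (W : {set V}) (P : pred V) :
  #|[set y in W | P y]| = \sum_(y in W) P y.
Proof.
rewrite -sum1_card [LHS]big_mkcond [RHS]big_mkcond /=.
apply: eq_bigr => i _; rewrite inE; by case: (i \in W); case: (P i).
Qed.

Lemma dg_sum {V : finType} (adj : rel V) W x : dg adj W x = \sum_(y in W) adj x y.
Proof. exact: card_sum. Qed.

Lemma dcount {V : finType} (adj : rel V) (sym : symmetric adj) (A B : {set V}) :
  \sum_(a in A) dg adj B a = \sum_(b in B) dg adj A b.
Proof.
under eq_bigr do rewrite dg_sum.
rewrite exchange_big /=; apply: eq_bigr => b _; rewrite dg_sum.
by apply: eq_bigr => a _; rewrite sym.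
Qed.

Lemma dg_split {V : finType} (adj : rel V) (W X : {set V}) y :
  X \subset W -> dg adj W y = dg adj X y + dg adj (W :\: X) y.
Proof.
move=> sXW; rewrite !dg_sum (big_setID X) /=.
by rewrite (setIidPr sXW).
Qed.

Lemma DS_split {V : finType} (adj : rel V) (sym : symmetric adj) (W X : {set V}) :
  X \subset W ->
  DS adj W = DS adj (W :\: X) + \sum_(x in X) (dg adj W x + dg adj (W :\: X) x).
Proof.
move=> sXW; rewrite /DS (big_setID X) /= (setIidPr sXW).
under [in X in _ + X = _]eq_bigr => y _ do rewrite (@dg_split _ adj W X y sXW).
rewrite big_split /= (@dcount _ adj sym (W :\: X) X) big_split /=; lia.
Qed.


Definition LC {V : finType} (adj : rel V) (n : nat) : Prop :=
  forall (W : {set V}) x y, adj x y -> n - 4 <= dg adj W x -> 4 <= dg adj W y ->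
  #|nb adj W x :|: nb adj W y| < n.

Lemma step_full {V : finType} (adj : rel V) (sym : symmetric adj)
  (irr : irreflexive adj) (n : nat) (n10 : 10 <= n) (lc : LC adj n)
  (W : {set V}) u (uW : u \in W) (hu : dg adj W u = n - 2)
  (hmax : forall x, x \in W -> dg adj W x <= n - 2) :
  \sum_(x in u |: nb adj W u) (dg adj W x + dg adj (W :\: (u |: nb adj W u)) x)
    <= (n - 1) * (n - 2).
Proof.
set X := u |: nb adj W u.
have cX : #|X| = n - 1 by rewrite cardsU1 nb_irr // -/(dg adj W u) hu; lia.
have sXW : X \subset W by rewrite subUset sub1set uW nb_sub.
apply: leq_trans (_ : \sum_(x in X) (n - 2) <= _); last by rewrite sum_nat_const cX.
apply: leq_sum => x xX.
have xW : x \in W by apply: (subsetP sXW).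
have hY : dg adj (W :\: X) x <= dg adj W x by apply: dg_mono; apply: subsetDl.
case: (leqP (dg adj W x) 3) => h3; first lia.
suff -> : dg adj (W :\: X) x = 0 by rewrite addn0 hmax.
case/setU1P: xX => [->|xN].
  apply/eqP; rewrite cards_eq0; apply/eqP/setP => y; rewrite in_nb !inE.
  by case: (y == u); case: (y \in W); case: (adj u y).
have aux : adj u x by move: xN; rewrite in_nb => /andP[].
have hl : #|nb adj W u :|: nb adj W x| < n.
  by apply: lc => //; rewrite ?hu; lia.
have sub : X :|: nb adj (W :\: X) x \subset nb adj W u :|: nb adj W x.
  apply/subsetP => y; rewrite !inE => /orP[/orP[/eqP ->|->//]|].
    by rewrite uW sym aux orbT.
  by case/andP=> /andP[_ ->] ->; rewrite orbT.
have dj : [disjoint X & nb adj (W :\: X) x].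
  rewrite -setI_eq0; apply/eqP/setP=> y; rewrite !inE.
  by case: (y == u); case: (y \in W); case: (adj u y); case: (adj x y).
have := subset_leq_card sub; rewrite card_disjU // cX /dg; lia.
Qed.


Lemma conclude_step {V : finType} (adj : rel V) (sym : symmetric adj) (n : nat)
  (n2 : 2 <= n) (W X : {set V}) (sXW : X \subset W) (cX : #|X| = n - 1)
  (hw : n - 1 <= #|W|)
  (hsum : \sum_(x in X) (dg adj W x + dg adj (W :\: X) x) <= (n - 1) * (n - 2))
  (IH : DS adj (W :\: X) + (#|W :\: X| %% (n - 1)) * (n - 1 - #|W :\: X| %% (n - 1))
          <= (n - 2) * #|W :\: X|) :
  DS adj W + (#|W| %% (n - 1)) * (n - 1 - #|W| %% (n - 1)) <= (n - 2) * #|W|.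
Proof.
have cW : #|W| = #|W :\: X| + (n - 1).
  by rewrite -cX -(cardsID X W) (setIidPr sXW) addnC.
rewrite (@DS_split _ adj sym W X sXW) cW modnDr mulnDr.
move: IH hsum; set a := DS _ _; set b := \sum_(x in X) _; set c := _ * _.
move=> IH hsum; rewrite [(n-2)*(n-1)]mulnC; lia.
Qed.

Lemma decomp {V : finType} (adj : rel V) (sym : symmetric adj) (irr : irreflexive adj)
  (W Q : {set V}) z : Q \subset W -> z \in W -> z \notin Q ->
  \sum_(x in z |: Q) (dg adj W x + dg adj (W :\: (z |: Q)) x) =
  \sum_(x in Q) (dg adj W x + dg adj (W :\: Q) x) + 2 * dg adj (W :\: (z |: Q)) z.
Proof.
move=> sQW zW zQ.
have eY : W :\: (z |: Q) = (W :\: Q) :\: [set z].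
  by apply/setP=> y; rewrite !inE; case: (y == z); case: (y \in Q).
have sz : [set z] \subset W :\: Q by rewrite sub1set inE zQ zW.
rewrite big_setU1 //= eY.
have e1 : forall x, dg adj (W :\: Q) x = dg adj [set z] x + dg adj (W :\: Q :\: [set z]) x.
  by move=> x; apply: dg_split.
under [in RHS]eq_bigr => x _ do rewrite e1.
rewrite (@dg_split _ adj W Q z sQW) e1.
have -> : dg adj [set z] z = 0.
  apply/eqP; rewrite cards_eq0; apply/eqP/setP=> y; rewrite !inE.
  by case: (y =P z) => [->|]; rewrite ?irr ?andbF.
have -> : \sum_(x in Q) (dg adj W x + (dg adj [set z] x + dg adj (W :\: Q :\: [set z]) x)) =
   \sum_(x in Q) (dg adj W x + dg adj (W :\: Q :\: [set z]) x) + \sum_(x in Q) dg adj [set z] x.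
  by rewrite -big_split /=; apply: eq_bigr => x _; lia.
rewrite (@dcount _ adj sym Q [set z]) big_set1.
lia.
Qed.


Lemma step_def1 {V : finType} (adj : rel V) (sym : symmetric adj)
  (irr : irreflexive adj) (n : nat) (n10 : 10 <= n) (lc : LC adj n)
  (W : {set V}) u (uW : u \in W) (hu : dg adj W u = n - 3)
  (hmax : forall x, x \in W -> dg adj W x <= n - 3) (hw : n - 1 <= #|W|) :
  exists z, [/\ z \in W, z \notin u |: nb adj W u &
  \sum_(x in z |: (u |: nb adj W u))
     (dg adj W x + dg adj (W :\: (z |: (u |: nb adj W u))) x) <= (n - 1) * (n - 2)].
Proof.
set Q := u |: nb adj W u.
have cQ : #|Q| = n - 2 by rewrite cardsU1 nb_irr // -/(dg adj W u) hu; move: n10; clear; lia.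
have sQW : Q \subset W by rewrite subUset sub1set uW nb_sub.
have o1 : forall v, v \in nb adj W u -> 4 <= dg adj W v -> dg adj (W :\: Q) v <= 1.
  move=> v vN h4.
  have auv : adj u v by move: vN; rewrite in_nb => /andP[].
  have hl : #|nb adj W u :|: nb adj W v| < n by apply: lc => //; rewrite hu; move: n10; clear; lia.
  have sub : Q :|: nb adj (W :\: Q) v \subset nb adj W u :|: nb adj W v.
    apply/subsetP => y; rewrite !inE => /orP[/orP[/eqP ->|->//]|].
      by rewrite uW sym auv orbT.
    by case/andP=> /andP[_ ->] ->; rewrite orbT.
  have dj : [disjoint Q & nb adj (W :\: Q) v].
    rewrite -setI_eq0; apply/eqP/setP=> y; rewrite !inE.
    by case: (y == u); case: (y \in W); case: (adj u y); case: (adj v y).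
  have := subset_leq_card sub; rewrite card_disjU // cQ /dg; move: hl; rewrite /dg; clear; lia.
have ou : dg adj (W :\: Q) u = 0.
  apply/eqP; rewrite cards_eq0; apply/eqP/setP => y; rewrite in_nb !inE.
  by case: (y == u); case: (y \in W); case: (adj u y).
have oW : forall x, dg adj (W :\: Q) x <= dg adj W x.
  by move=> x; apply: dg_mono; apply: subsetDl.
have QW : forall x, x \in Q -> x \in W by move=> x; apply: (subsetP sQW).
have QN : forall x, x \in Q -> x != u -> x \in nb adj W u.
  by move=> x; rewrite /Q in_setU1 => /orP[->|//].
have [hA|hA] := boolP [exists v in nb adj W u, exists z in W :\: Q,
                         (n - 4 <= dg adj W v) && adj v z].
  case/exists_inP: hA => v vN /exists_inP[z zWQ /andP[hv avz]].
  move: (zWQ); rewrite inE => /andP[zQ zW].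
  exists z; split => //; rewrite (@decomp _ adj sym irr W Q z sQW zW zQ).
  set Y := W :\: (z |: Q).
  have sQ : \sum_(x in Q) (dg adj W x + dg adj (W :\: Q) x) <= \sum_(x in Q) (n - 2).
    apply: leq_sum => x xQ.
    have xW := QW x xQ; have := hmax x xW.
    case: (x =P u) => [->|/eqP xu]; first by rewrite ou; move: n10; clear; lia.
    have := oW x; case: (leqP (dg adj W x) 3) => h3; first by move: h3 n10; clear; lia.
    by have := o1 x (QN x xQ xu) h3; move: n10; clear; lia.
  rewrite sum_nat_const cQ in sQ.
  have vQ : v \in Q by rewrite /Q in_setU1 vN orbT.
  have vW := QW v vQ.
  have vY : v \notin nb adj Y z by rewrite in_nb /Y inE in_setU1 vQ orbT.
  have vz : v \in nb adj W z by rewrite in_nb vW sym avz.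
  have sYW : nb adj Y z \subset nb adj W z by apply: nb_mono; apply: subsetDl.
  have dYz : dg adj Y z <= 2.
    case: (leqP (dg adj W z) 3) => h3.
      have : v |: nb adj Y z \subset nb adj W z by rewrite subUset sub1set vz sYW.
      by move/subset_leq_card; rewrite cardsU1 vY /dg; move: h3; rewrite /dg; clear; lia.
    have hl : #|nb adj W v :|: nb adj W z| < n by apply: lc => //; move: hv h3 n10; clear; lia.
    have sub : v |: (nb adj W v :|: nb adj Y z) \subset nb adj W v :|: nb adj W z.
      rewrite subUset sub1set inE vz orbT /=; apply/subsetP => y.
      rewrite !inE => /orP[->//|/andP[/andP[_ ->] ->]]; by rewrite orbT.
    have vnot : v \notin nb adj W v :|: nb adj Y z by rewrite inE negb_or nb_irr.
    have dj : [disjoint nb adj W v & nb adj Y z].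
      rewrite -setI_eq0; apply/eqP/setP=> y; rewrite in_setI in_set0 !in_nb.
      apply/negbTE/negP => /andP[/andP[yW avy] /andP[yY azy]].
      move: yY; rewrite /Y in_setD in_setU1 negb_or => /andP[/andP[yz yQ] _].
      have : [set y; z] \subset nb adj (W :\: Q) v.
        by rewrite subUset !sub1set !in_nb !in_setD avy avz zW zQ yQ yW.
      move/subset_leq_card; rewrite cards2 yz /=.
      have h4v : 3 < dg adj W v by move: hv n10; clear; lia.
      move=> h2; have h1 := o1 v vN h4v; rewrite /dg in h1.
      by rewrite ltnNge h1 in h2.
    have := subset_leq_card sub; rewrite cardsU1 vnot card_disjU // /dg; move: hl hv n10; rewrite /dg; clear; lia.
  apply: leq_trans (leq_add sQ (leq_mul (leqnn 2) dYz)) _; clear -n10; nia.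
have : 0 < #|W :\: Q|.
  by have := cardsID Q W; rewrite (setIidPr sQW) cQ; move: hw n10; clear; lia.
case/card_gt0P => z zWQ; move: (zWQ); rewrite inE => /andP[zQ zW].
exists z; split => //; rewrite (@decomp _ adj sym irr W Q z sQW zW zQ).
have sQ : \sum_(x in Q) (dg adj W x + dg adj (W :\: Q) x) <= \sum_(x in Q) (n - 3).
  apply: leq_sum => x xQ.
  have xW := QW x xQ; have := hmax x xW.
  case: (x =P u) => [->|/eqP xu]; first by rewrite ou; move: n10; clear; lia.
  have := oW x; case: (leqP (dg adj W x) 3) => h3; first by move: h3 n10; clear; lia.
  have := o1 x (QN x xQ xu) h3.
  case: (posnP (dg adj (W :\: Q) x)) => [-> |]; first by move: n10; clear; lia.
  case/card_gt0P => z' z'N.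
  move: (z'N); rewrite in_nb => /andP[z'WQ axz'].
  have : ~~ ((n - 4 <= dg adj W x) && adj x z').
    apply: contra hA => hh; apply/exists_inP; exists x; first exact: QN.
    by apply/exists_inP; exists z'.
  rewrite axz' andbT -ltnNge; rewrite /dg; move: n10; clear; lia.
rewrite sum_nat_const cQ in sQ.
have : dg adj (W :\: (z |: Q)) z <= n - 3.
  by apply: leq_trans (hmax z zW); apply: dg_mono; apply: subsetDl.
move=> hz; apply: leq_trans (leq_add sQ (leq_mul (leqnn 2) hz)) _; clear -n10; nia.
Qed.


Lemma arith_big n mu l c : 10 <= n -> 1 <= mu -> n - 1 <= l -> c <= 4 * (n - 5) ->
  3 * l + c <= (n - 2) * mu + (n - 5) * l.
Proof. move=> h1 h2 h3 h4; nia. Qed.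

Lemma step_big {V : finType} (adj : rel V) (sym : symmetric adj)
  (irr : irreflexive adj) (n : nat) (n10 : 10 <= n) (lc : LC adj n)
  (W : {set V}) u (uW : u \in W) (hu : n - 1 <= dg adj W u) c (hc : c <= 4 * (n - 5)) :
  DS adj W + c <= (n - 2) * #|W|.
Proof.
set U := [set x in W | n - 1 <= dg adj W x].
set L := [set x in W | dg adj W x <= 3].
have sUW : U \subset W by apply/subsetP=> x; rewrite inE => /andP[].
have sLW : L \subset W by apply/subsetP=> x; rewrite inE => /andP[].
have hUL : forall x, x \in U -> nb adj W x \subset L.
  move=> x; rewrite inE => /andP[xW hx]; apply/subsetP => y yN.
  move: (yN); rewrite in_nb => /andP[yW axy].
  rewrite inE yW /=; rewrite leqNgt; apply/negP => h4.
  have hl : #|nb adj W x :|: nb adj W y| < n.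
    by apply: lc => //; move: hx n10; clear; lia.
  have sub : x |: nb adj W x \subset nb adj W x :|: nb adj W y.
    by rewrite subUset sub1set !inE xW sym axy orbT subsetUl.
  move: (subset_leq_card sub); rewrite cardsU1 nb_irr //= -/(dg adj W x).
  by move: hl hx n10; clear; lia.
have uU : u \in U by rewrite inE uW hu.
have cU : 1 <= #|U| by apply/card_gt0P; exists u.
have cL : n - 1 <= #|L|.
  by apply: leq_trans hu _; apply: subset_leq_card; apply: hUL.
have sLWU : L \subset W :\: U.
  apply/subsetP=> x; rewrite !inE => /andP[-> h3]; rewrite andbT -ltnNge.
  by move: h3 n10; clear; lia.
rewrite /DS (big_setID U) /= (setIidPr sUW).
have hA : \sum_(x in U) dg adj W x <= 3 * #|L|.
  have -> : \sum_(x in U) dg adj W x = \sum_(x in U) dg adj L x.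
    apply: eq_bigr => x xU.
    suff e : nb adj W x = nb adj L x by rewrite /dg e.
    apply/setP=> y; rewrite !in_nb; case: (boolP (adj x y)); rewrite ?andbF ?andbT //.
    move=> axy; apply/idP/idP => [yW|/(subsetP sLW)//].
    by apply: (subsetP (hUL x xU)); rewrite in_nb yW axy.
  rewrite (@dcount _ adj sym U L) mulnC -sum_nat_const.
  apply: leq_sum => y; rewrite inE => /andP[_ h3].
  by apply: leq_trans h3; apply: dg_mono.
have hB : \sum_(x in W :\: U) dg adj W x + (n - 5) * #|L| <= (n - 2) * #|W :\: U|.
  have -> : #|L| = \sum_(x in W :\: U) (x \in L).
    rewrite -card_sum.
    suff e : [set x in W :\: U | x \in L] = L by rewrite e.
    apply/setP=> x; rewrite inE.
    by case: (boolP (x \in L)) => h; rewrite ?andbT ?andbF // (subsetP sLWU).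
  rewrite big_distrr /= -big_split /= mulnC -sum_nat_const.
  apply: leq_sum => x; rewrite inE => /andP[xU xW].
  move: xU; rewrite inE xW /= -ltnNge => h.
  case: (boolP (x \in L)) => xL /=.
    by move: xL; rewrite inE => /andP[_ h3]; move: h3 n10; clear; lia.
  by move: h n10; clear; lia.
have cW : #|W| = #|U| + #|W :\: U| by rewrite -(cardsID U W) (setIidPr sUW).
rewrite cW mulnDr.
have := @arith_big n #|U| #|L| c n10 cU cL hc.
move: hA hB; clear; lia.
Qed.


Definition inA (n r : nat) : bool := r \in [:: 0; 1; 2; n - 5; n - 4; n - 3; n - 2].

Lemma inA_cases n r : inA n r ->
  r = 0 \/ r = 1 \/ r = 2 \/ r = n - 5 \/ r = n - 4 \/ r = n - 3 \/ r = n - 2.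
Proof.
rewrite /inA !inE.
case/orP=> [/eqP->|]; first by left.
case/orP=> [/eqP->|]; first by right; left.
case/orP=> [/eqP->|]; first by do 2 right; left.
case/orP=> [/eqP->|]; first by do 3 right; left.
case/orP=> [/eqP->|]; first by do 4 right; left.
case/orP=> [/eqP->|/eqP->]; first by do 5 right; left.
by do 6 right.
Qed.

Lemma phi_le4 n r : 10 <= n -> inA n r -> r * (n - 1 - r) <= 4 * (n - 5).
Proof.
move=> n10 /inA_cases [->|[->|[->|[->|[->|[->|->]]]]]].
- by [].
- have -> : n - 1 - 1 = n - 2 by lia. lia.
- have -> : n - 1 - 2 = n - 3 by lia. lia.
- have -> : n - 1 - (n - 5) = 4 by lia. lia.
- have -> : n - 1 - (n - 4) = 3 by lia. lia.
- have -> : n - 1 - (n - 3) = 2 by lia. lia.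
- have -> : n - 1 - (n - 2) = 1 by lia. lia.
Qed.

Lemma phi_2w n r w : 10 <= n -> inA n r -> n - 1 + r <= w -> r * (n - 1 - r) <= 2 * w.
Proof.
move=> n10 /inA_cases [->|[->|[->|[->|[->|[->|->]]]]]] hw.
- by [].
- have -> : n - 1 - 1 = n - 2 by lia. lia.
- have -> : n - 1 - 2 = n - 3 by lia. lia.
- have -> : n - 1 - (n - 5) = 4 by lia. lia.
- have -> : n - 1 - (n - 4) = 3 by lia. lia.
- have -> : n - 1 - (n - 3) = 2 by lia. lia.
- have -> : n - 1 - (n - 2) = 1 by lia. lia.
Qed.

Lemma mod_ge d w : 0 < d -> d <= w -> d + w %% d <= w.
Proof.
move=> d0 hw.
have q1 : 0 < w %/ d by rewrite divn_gt0.
have e := divn_eq w d.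
have : d <= w %/ d * d by rewrite leq_pmull.
move: e; set q := w %/ d * d; set r := w %% d; lia.
Qed.

Lemma main_lemma {V : finType} (adj : rel V) (sym : symmetric adj)
  (irr : irreflexive adj) (n : nat) (n10 : 10 <= n) (lc : LC adj n) :
  forall W : {set V}, inA n (#|W| %% (n - 1)) ->
  DS adj W + (#|W| %% (n - 1)) * (n - 1 - #|W| %% (n - 1)) <= (n - 2) * #|W|.
Proof.
suff H : forall m (W : {set V}), #|W| < m -> inA n (#|W| %% (n - 1)) ->
  DS adj W + (#|W| %% (n - 1)) * (n - 1 - #|W| %% (n - 1)) <= (n - 2) * #|W|.
  by move=> W; apply: H (ltnSn _).
elim=> [|m IH] W //.
move=> hm hA.
case: (ltnP #|W| (n - 1)) => hw.
  rewrite (modn_small hw).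
  have hD : DS adj W <= #|W| * (#|W| - 1).
    rewrite /DS -sum_nat_const; apply: leq_sum => x xW.
    rewrite (cardsD1 x W) xW /= add1n subSS subn0 /dg.
    apply: subset_leq_card; apply/subsetP=> y; rewrite in_nb !inE => /andP[-> axy].
    by rewrite andbT; apply/eqP => eyx; move: axy; rewrite eyx irr.
  apply: leq_trans (leq_add hD (leqnn _)) _.
  rewrite -mulnDr [_ * #|W|]mulnC leq_mul2l.
  case: (posnP #|W|) => [->//|h0]; apply/orP; right.
  by move: h0 hw; clear; lia.
have IHs : forall X : {set V}, X \subset W -> #|X| = n - 1 ->
    DS adj (W :\: X) + (#|W :\: X| %% (n - 1)) * (n - 1 - #|W :\: X| %% (n - 1))
      <= (n - 2) * #|W :\: X|.
  move=> X sXW cX.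
  have cW : #|W| = #|W :\: X| + (n - 1).
    by rewrite -cX -(cardsID X W) (setIidPr sXW) addnC.
  apply: IH; first by move: hm; rewrite cW; move: n10; clear; lia.
  by move: hA; rewrite cW modnDr.
have [hU|hU] := boolP [exists x in W, n - 1 <= dg adj W x].
  case/exists_inP: hU => u uW hu.
  exact: (@step_big _ adj sym irr n n10 lc W u uW hu _ (@phi_le4 n _ n10 hA)).
have hmax2 : forall x, x \in W -> dg adj W x <= n - 2.
  move=> x xW; rewrite leqNgt; apply/negP => h.
  move/negP: hU; apply; apply/exists_inP; exists x => //.
  by move: h n10; clear; lia.
have [h4|h4] := boolP [exists x in W, dg adj W x == n - 2].
  case/exists_inP: h4 => u uW /eqP hu.
  have sXW : u |: nb adj W u \subset W by rewrite subUset sub1set uW nb_sub.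
  have cX : #|u |: nb adj W u| = n - 1.
    by rewrite cardsU1 nb_irr // -/(dg adj W u) hu; move: n10; clear; lia.
  apply: (@conclude_step _ adj sym n _ W _ sXW cX hw); first by move: n10; clear; lia.
    exact: (@step_full _ adj sym irr n n10 lc W u uW hu hmax2).
  exact: IHs.
have hmax3 : forall x, x \in W -> dg adj W x <= n - 3.
  move=> x xW; have := hmax2 x xW; rewrite leq_eqVlt => /orP[/eqP e|h].
    by move/negP: h4; case; apply/exists_inP; exists x => //; rewrite e.
  by move: h n10; clear; lia.
have [h5|h5] := boolP [exists x in W, dg adj W x == n - 3].
  case/exists_inP: h5 => u uW /eqP hu.
  have [z [zW zQ hs]] := @step_def1 _ adj sym irr n n10 lc W u uW hu hmax3 hw.
  have sQW : u |: nb adj W u \subset W by rewrite subUset sub1set uW nb_sub.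
  have sXW : z |: (u |: nb adj W u) \subset W by rewrite subUset sub1set zW sQW.
  have cX : #|z |: (u |: nb adj W u)| = n - 1.
    rewrite cardsU1 zQ cardsU1 nb_irr // -/(dg adj W u) hu; move: n10; clear; lia.
  apply: (@conclude_step _ adj sym n _ W _ sXW cX hw hs); first by move: n10; clear; lia.
  exact: IHs.
have hmax4 : forall x, x \in W -> dg adj W x <= n - 4.
  move=> x xW; have := hmax3 x xW; rewrite leq_eqVlt => /orP[/eqP e|h].
    by move/negP: h5; case; apply/exists_inP; exists x => //; rewrite e.
  by move: h n10; clear; lia.
have hD : DS adj W <= #|W| * (n - 4).
  by rewrite /DS -sum_nat_const; apply: leq_sum.
have n1 : 0 < n - 1 by move: n10; clear; lia.
have hp := @phi_2w n _ _ n10 hA (@mod_ge _ _ n1 hw).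
have -> : (n - 2) * #|W| = #|W| * (n - 4) + 2 * #|W|.
  rewrite [(n-2) * _]mulnC [2 * _]mulnC -mulnDr; congr (_ * _); move: n10; clear; lia.
exact: leq_add.
Qed.


Lemma exists_sub {T : finType} {S : {set T}} {k : nat} : k <= #|S| ->
  exists C : {set T}, C \subset S /\ #|C| = k.
Proof.
case/card_geqP => s [us ss hs]; exists [set x in s]; split.
  by apply/subsetP => x; rewrite inE => /hs.
by rewrite cardsE (card_uniqP us).
Qed.

Lemma choose3 {T : finType} (A0 B0 : {set T}) m :
  3 <= #|B0| -> m <= #|A0| -> m + 3 <= #|A0 :|: B0| ->
  exists B1 : {set T}, [/\ B1 \subset B0, #|B1| = 3 & m <= #|A0 :\: B1|].
Proof.
move=> hB hA hU.
set K := B0 :\: A0.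
have eU : #|A0 :|: B0| = #|A0| + #|K|.
  rewrite cardsU -(cardsID A0 B0) setIC; move: (#|A0|) (#|B0 :&: A0|) (#|K|); clear; lia.
case: (leqP 3 #|K|) => hK.
  have [C [sC cC]] := exists_sub hK.
  exists C; split => //.
    by apply: subset_trans sC _; apply: subsetDl.
  suff -> : A0 :\: C = A0 by [].
  apply/setP => x; rewrite inE; case: (boolP (x \in A0)) => xA; rewrite ?andbF ?andbT //.
  apply/negP => /(subsetP sC); by rewrite inE xA.
set I := B0 :&: A0.
have eB : #|I| + #|K| = #|B0| by rewrite cardsID.
have hI : 3 - #|K| <= #|I| by move: eB hB; clear; lia.
have [C [sC cC]] := exists_sub hI.
have sCA : C \subset A0 by apply: subset_trans sC _; apply: subsetIr.
have sCB : C \subset B0 by apply: subset_trans sC _; apply: subsetIl.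
exists (K :|: C); split.
- by rewrite subUset sCB subsetDl.
- rewrite card_disjU ?cC; first by move: hK; clear; lia.
  rewrite -setI_eq0; apply/eqP/setP => x; rewrite !inE.
  case: (boolP (x \in C)) => xC; rewrite ?andbF //.
  by rewrite (subsetP sCA x xC) /=; case: (x \in B0).
- have -> : A0 :\: (K :|: C) = A0 :\: C.
    apply/setP => x; rewrite !inE; case: (x \in A0); by rewrite ?andbF ?andbT.
  have := cardsID C A0; rewrite (setIidPr sCA) cC.
  move: eU hU hK; clear; lia.
Qed.


Lemma card_U1_le {T : finType} (a : T) (S : {set T}) : #|a |: S| <= #|S|.+1.
Proof. by rewrite cardsU1; case: (a \notin S). Qed.

Lemma embed {V : finType} (n : nat) (E : rel V) (n10 : 10 <= n)
  (irr : forall x, ~~ E x x) (sym : forall x y, E x y = E y x)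
  (x y : V) (A B : {set V})
  (axy : E x y) (hA : forall a, a \in A -> E x a)
  (hB : forall b, b \in B -> E y b)
  (cA : n - 4 <= #|A|) (cB : 4 <= #|B|) (cU : n <= #|A :|: B|) :
  exists f : 'I_n -> V, injective f /\ forall i j, T3 n i j -> E (f i) (f j).
Proof.
set A0 := A :\ y; set B0 := B :\ x.
have xA : x \notin A by apply/negP => /hA; rewrite (negbTE (irr x)).
have yB : y \notin B by apply/negP => /hB; rewrite (negbTE (irr y)).
have cA0 : n - 5 <= #|A0|.
  by rewrite /A0; have := cardsD1 y A; move: cA; clear; case: (y \in A) => /= h1 h2; lia.
have cB0 : 3 <= #|B0| by rewrite /B0; have := cardsD1 x B; move: cB; clear; case: (x \in B) => /= h1 h2; lia.
have cU0 : n - 5 + 3 <= #|A0 :|: B0|.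
  have : A :|: B \subset x |: (y |: (A0 :|: B0)).
    apply/subsetP => z; rewrite !inE.
    case: (z =P x) => //= _; case: (z =P y) => //= _.
  move/subset_leq_card; have := card_U1_le x (y |: (A0 :|: B0)).
  have := card_U1_le y (A0 :|: B0); move: cU n10; clear; lia.
have [B1 [sB1 cB1 hAB]] := @choose3 _ A0 B0 _ cB0 cA0 cU0.
have [A1 [sA1 cA1]] := exists_sub hAB.
set l := [:: x; y] ++ (enum A1 ++ enum B1).
have sl : size l = n by rewrite /= size_cat -!cardE cA1 cB1; move: n10; clear; lia.
have xy : x != y by apply/eqP => e; move: axy; rewrite e (negbTE (irr y)).
have A1A : forall a, a \in A1 -> a \in A.
  by move=> a /(subsetP sA1); rewrite !inE => /andP[_ /andP[_ ->]].
have A1y : forall a, a \in A1 -> a != y.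
  by move=> a /(subsetP sA1); rewrite !inE => /andP[_ /andP[-> _]].
have A1B : forall a, a \in A1 -> a \notin B1.
  by move=> a /(subsetP sA1); rewrite !inE => /andP[-> _].
have B1B : forall b, b \in B1 -> b \in B.
  by move=> b /(subsetP sB1); rewrite !inE => /andP[_ ->].
have B1x : forall b, b \in B1 -> b != x.
  by move=> b /(subsetP sB1); rewrite !inE => /andP[-> _].
have ul : uniq l.
  rewrite /l cat_uniq /= inE xy /=.
  apply/andP; split.
    apply/hasPn => z; rewrite mem_cat !mem_enum => /orP[zA|zB]; rewrite !inE negb_or.
      apply/andP; split; last exact: A1y.
      by apply/eqP => e; move: (A1A z zA); rewrite e (negbTE xA).
    apply/andP; split; first exact: B1x.
    by apply/eqP => e; move: (B1B z zB); rewrite e (negbTE yB).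
  rewrite cat_uniq !enum_uniq /= andbT; apply/hasPn => b; rewrite !mem_enum => bB.
  by apply/negP => /A1B; rewrite bB.
exists (fun i : 'I_n => nth x l i); split.
  move=> i j /= e; apply: val_inj => /=.
  by apply/eqP; rewrite -(nth_uniq x _ _ ul) ?sl // e.
have key : forall i j : 'I_n, T3_edge n i j -> E (nth x l i) (nth x l j).
  move=> [i hi] [j hj] /=; rewrite /T3_edge.
  case/orP => /andP[/eqP -> hj'].
    case: j hj hj' => [//|[|j]] hj hj' /=; first by [].
    rewrite nth_cat -cardE cA1.
    have -> : j < n - 5 by move: hj' n10; clear; lia.
    apply: hA; apply: A1A; rewrite -mem_enum; apply: mem_nth.
    by rewrite -cardE cA1; move: hj' n10; clear; lia.
  case: j hj hj' => [|[|j]] hj hj' /=; try by move: hj' n10; clear; lia.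
  rewrite nth_cat -cardE cA1.
  have -> : (j < n - 5) = false by apply/negbTE; rewrite -leqNgt; move: hj' n10; clear; lia.
  apply: hB; apply: B1B; rewrite -mem_enum; apply: mem_nth.
  by rewrite -cardE cB1; move: hj' hj n10; clear; lia.
move=> i j; rewrite /T3.
case/orP => h; first exact: key.
by rewrite sym; apply: key.
Qed.


Lemma card_E_DS (p : nat) (E : {set 'I_p * 'I_p}) :
  #|E| = DS (fun x y => (x, y) \in E) setT.
Proof.
rewrite /DS -sum1_card big_mkcond /=.
transitivity (\sum_x \sum_y (((x, y) \in E) : nat)).
  rewrite pair_bigA /=; apply: eq_bigr => [[x y]] _ /=; by case: ((x, y) \in E).
apply: eq_big => [x|x _]; first by rewrite inE.
rewrite dg_sum; apply: eq_big => [y|y _] //; by rewrite inE.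
Qed.

Lemma card_E_nedges (p : nat) (E : {set 'I_p * 'I_p}) :
  simple_graph p E -> #|E| = 2 * nedges p E.
Proof.
case/andP => /forallP irr /forallP sym.
set S1 := [set e in E | (e.1 < e.2)%N].
set sw := fun e : 'I_p * 'I_p => (e.2, e.1).
have swK : involutive sw by case.
have eE : E = S1 :|: sw @^-1: S1.
  apply/setP => [[x y]]; rewrite !inE /sw /=.
  apply/idP/idP.
    move=> h; have h' : (y, x) \in E by move: (sym x) => /forallP/(_ y)/implyP; apply.
    rewrite h h' /=; case: (ltngtP x y) => //= exy.
    by move: h; rewrite (val_inj exy) (negbTE (irr y)).
  case/orP => /andP[// h _].
  by move: (sym y) => /forallP/(_ x)/implyP; apply.
have dj : [disjoint S1 & sw @^-1: S1].
  rewrite -setI_eq0; apply/eqP/setP => [[x y]]; rewrite !inE /sw /=.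
  by case: (ltngtP x y); rewrite ?andbF.
rewrite /nedges -/S1 {1}eE card_disjU // card_preimset; last exact: inv_inj.
by rewrite addnn -mul2n.
Qed.


Lemma cnt_block p d b c : 0 < d -> c <= d -> b * d + c <= p -> (c < d -> p = b * d + c) ->
  \sum_(0 <= j < p) (j %/ d == b) = c.
Proof.
move=> d0 cd hp hc.
rewrite (@big_cat_nat _ _ _ (b * d)) //=; last by move: hp; clear; lia.
rewrite (@big_cat_nat _ _ _ (b * d + c) (b * d)) //=; last by rewrite leq_addr.
have -> : \sum_(0 <= j < b * d) (j %/ d == b) = 0.
  rewrite big_nat_cond big1 // => j /andP[/andP[_ hj] _].
  have : j %/ d < b by rewrite ltn_divLR.
  by move/ltn_eqF => ->.
have -> : \sum_(b * d <= j < b * d + c) (j %/ d == b) = c.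
  rewrite big_nat_cond (eq_bigr (fun _ => 1)).
    by rewrite -big_nat_cond sum_nat_const_nat muln1 addKn.
  move=> j /andP[/andP[h1 h2] _].
  have -> : j = b * d + (j - b * d) by move: h1; clear; lia.
  rewrite divnMDl // divn_small ?addn0 ?eqxx //.
  by move: h1 h2 cd; clear; lia.
have -> : \sum_(b * d + c <= j < p) (j %/ d == b) = 0.
  case: (ltnP c d) => hcd.
    by rewrite -(hc hcd) big_geq.
  rewrite big_nat_cond big1 // => j /andP[/andP[h1 _] _].
  have : b.+1 <= j %/ d by rewrite leq_divRL // mulSn; move: h1 hcd cd; clear; lia.
  by move=> h; rewrite eq_sym (ltn_eqF h).
by rewrite add0n addn0.
Qed.

Definition adj0 (p d : nat) (i j : 'I_p) : bool := (i != j) && (i %/ d == j %/ d).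

Lemma dg_adj0 p d (i : 'I_p) :
  dg (adj0 p d) setT i = \sum_(0 <= j < p) (j %/ d == i %/ d) - 1.
Proof.
rewrite dg_sum big_mkord.
rewrite (eq_bigl (fun j => true)); last by move=> j; rewrite inE.
rewrite (bigD1 i) //= [in RHS](bigD1 i) //= eqxx /adj0 eqxx /= add0n add1n subSS subn0.
apply: eq_bigr => j ji; by rewrite eq_sym ji /= eq_sym.
Qed.

Lemma DS_adj0 p d k r : 0 < d -> r < d -> p = k * d + r ->
  DS (adj0 p d) setT = k * d * (d - 1) + r * (r - 1).
Proof.
move=> d0 rd hp.
rewrite /DS (eq_bigl (fun j => true)); last by move=> j; rewrite inE.
under eq_bigr => i _ do rewrite dg_adj0.
rewrite -(big_mkord xpredT (fun i => \sum_(0 <= j < p) (j %/ d == i %/ d) - 1)).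
rewrite (@big_cat_nat _ _ _ (k * d)) //=; last by rewrite hp leq_addr.
rewrite big_nat_cond (eq_bigr (fun _ => d - 1)); last first.
  move=> i /andP[/andP[_ hi] _].
  rewrite (@cnt_block p d (i %/ d) d) //.
    have : i %/ d < k by rewrite ltn_divLR.
    move=> h; rewrite hp; have : (i %/ d).+1 * d <= k * d by rewrite leq_mul2r h orbT.
    by rewrite mulSn; clear; lia.
  by rewrite ltnn.
rewrite -big_nat_cond sum_nat_const_nat subn0.
rewrite big_nat_cond (eq_bigr (fun _ => r - 1)); last first.
  move=> i /andP[/andP[h1 h2] _].
  have ei : i %/ d = k.
    apply/eqP; rewrite eqn_leq leq_divRL // h1 andbT.
    by rewrite -ltnS ltn_divLR // mulSn; move: h2 rd; rewrite hp; clear; lia.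
  rewrite ei (@cnt_block p d k r) //; [by move: rd; clear; lia|by rewrite hp].
rewrite -big_nat_cond sum_nat_const_nat.
have -> : p - k * d = r by rewrite hp; clear; lia.
by [].
Qed.


Definition E0 (p d : nat) : {set 'I_p * 'I_p} := [set e | adj0 p d e.1 e.2].

Lemma simple_E0 p d : simple_graph p (E0 p d).
Proof.
apply/andP; split; apply/forallP => x; first by rewrite inE /adj0 /= eqxx.
apply/forallP => y; apply/implyP; rewrite !inE /adj0 /= => /andP[h1 /eqP h2].
by rewrite eq_sym h1 h2 eqxx.
Qed.

Lemma free_E0 p d n : 0 < d -> d < n -> 5 <= n -> ~~ contains_sub p n (E0 p d) (T3 n).
Proof.
move=> d0 dn n5; apply/negP => /existsP[f /andP[/injectiveP finj /forallP hf]].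
have hE : forall i j, T3 n i j -> f i %/ d = f j %/ d.
  move=> i j h; move: (hf i) => /forallP/(_ j)/implyP/(_ h).
  by rewrite inE /adj0 /= => /andP[_ /eqP].
have n0 : 0 < n by move: n5; clear; lia.
have n1 : 1 < n by move: n5; clear; lia.
set i0 : 'I_n := Ordinal n0; set i1 : 'I_n := Ordinal n1.
have h01 : T3 n i0 i1.
  rewrite /T3 /T3_edge /i0 /i1 /=.
  by have -> : 0 < n - 4 by move: n5; clear; lia.
have hb : forall j, f j %/ d = f i0 %/ d.
  move=> j; case: (posnP j) => [j0|jpos].
    by have -> : j = i0 by apply: val_inj; rewrite /= j0.
  case: (leqP j (n - 4)) => hj.
    apply/esym/hE; rewrite /T3 /T3_edge /i0 /=.
    suff -> : 0 < j <= n - 4 by [].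
    by apply/andP; split; move: jpos hj; clear; lia.
  have := hE _ _ h01 => ->; apply/esym/hE.
  rewrite /T3 /T3_edge /i1 /=.
  suff -> : n - 3 <= j <= n - 1 by rewrite ?orbT.
  by have := ltn_ord j; move=> hjn; apply/andP; split; move: hj hjn n5; clear; lia.
pose g (i : 'I_n) : 'I_d := Ordinal (ltn_pmod (f i) d0).
have ginj : injective g.
  move=> i j /(congr1 val) /= e; apply: finj; apply: val_inj => /=.
  have e1 := divn_eq (f i) d; have e2 := divn_eq (f j) d.
  by rewrite e1 e2 e (hb i) (hb j).
by have := leq_card g ginj; rewrite !card_ord; move: dn; clear; lia.
Qed.

Lemma DS_ext {V : finType} (a1 a2 : rel V) W : a1 =2 a2 -> DS a1 W = DS a2 W.
Proof.
move=> e; rewrite /DS; apply: eq_bigr => x _; rewrite !dg_sum.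
by apply: eq_bigr => y _; rewrite e.
Qed.

Theorem theorem4p1 (p n k r : nat) :
  10 <= n -> n <= p -> 0 < k ->
  p = k * (n - 1) + r ->
  r \in [:: 0; 1; 2; n - 5; n - 4; n - 3; n - 2] ->
  ex p (T3 n) = ((n - 2) * p - r * (n - 1 - r)) %/ 2.
Proof.
move=> n10 np k0 hp hr.
have hA : inA n r by [].
have rN : r < n - 1.
  by case: (@inA_cases n r hA) => [->|[->|[->|[->|[->|[->|->]]]]]]; move: n10; clear; lia.
have hmod : p %% (n - 1) = r by rewrite hp modnMDl modn_small.
have up : forall E, simple_graph p E && ~~ contains_sub p n E (T3 n) ->
    2 * nedges p E + r * (n - 1 - r) <= (n - 2) * p.
  move=> E /andP[sE fE].
  have sE' := sE; case/andP: sE' => /forallP irr0 /forallP sym0.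
  set adj := fun x y : 'I_p => (x, y) \in E.
  have irr : irreflexive adj by move=> x; apply/negbTE; exact: irr0.
  have sym : symmetric adj.
    move=> x y; rewrite /adj; apply/idP/idP => h.
      by move: (sym0 x) => /forallP/(_ y)/implyP; apply.
    by move: (sym0 y) => /forallP/(_ x)/implyP; apply.
  have lc : LC adj n.
    move=> W x y axy hx hy; rewrite ltnNge; apply/negP => hU.
    have [f [finj fT]] := @embed _ n adj n10 (fun x => negbT (irr x)) sym x y
      (nb adj W x) (nb adj W y) axy
      (fun a ha => proj2 (andP (eq_ind _ is_true ha _ (in_nb adj W x a))))
      (fun b hb => proj2 (andP (eq_ind _ is_true hb _ (in_nb adj W y b)))) hx hy hU.
    move/negP: fE; apply; apply/existsP; exists (finfun f); apply/andP; split.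
      by apply/injectiveP => i j; rewrite !ffunE; exact: finj.
    apply/forallP => i; apply/forallP => j; apply/implyP => h; rewrite !ffunE.
    exact: fT.
  have := @main_lemma _ adj sym irr n n10 lc setT.
  rewrite cardsT card_ord hmod -card_E_DS card_E_nedges //.
  by apply.
have lo : 2 * nedges p (E0 p (n - 1)) + r * (n - 1 - r) = (n - 2) * p.
  rewrite -card_E_nedges; last exact: simple_E0.
  rewrite card_E_DS (@DS_ext _ _ (adj0 p (n - 1))); last by move=> x y; rewrite inE.
  rewrite (@DS_adj0 p (n - 1) k r) //; last by move: n10; clear; lia.
  rewrite -addnA.
  have -> : r * (r - 1) + r * (n - 1 - r) = r * (n - 2).
    rewrite -mulnDr; case: (posnP r) => [->|r0]; first by rewrite !mul0n.
    by congr (_ * _); move: r0 rN; clear; lia.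
  have -> : n - 1 - 1 = n - 2 by clear; lia.
  by rewrite hp mulnDr [(n - 2) * (k * _)]mulnC [(n - 2) * r]mulnC.
apply/eqP; rewrite eqn_leq; apply/andP; split.
  apply/bigmax_leqP => E hE; rewrite leq_divRL //; have := up E hE.
  by rewrite mulnC; move: (nedges p E) (r * (n - 1 - r)) ((n - 2) * p); clear; lia.
have hE0 : simple_graph p (E0 p (n - 1)) && ~~ contains_sub p n (E0 p (n - 1)) (T3 n).
  rewrite simple_E0 /=; apply: free_E0; move: n10; clear; lia.
rewrite /ex; apply: leq_trans _ (@leq_bigmax_cond _ _ (nedges p) (E0 p (n - 1)) hE0).
by rewrite -lo addnK mulKn.
Qed.
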